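(* Let $K$ be a field and $M$ a finite $K$-Galois module. If coclasses $\sigma_1,\sigma_2,\sigma_1+\sigma_2\in H^1(K,M)$ correspond to étale $K$-algebras $L_1,L_2,L$ respectively, then $L$ is isomorphic to a $K$-subalgebra of $L_1\otimes_K L_2$.
   Context: $M$ is a finite abelian group with a continuous action $\phi:G_K\to\operatorname{Aut}M$, $G_K=\operatorname{Gal}(K^{\mathrm{sep}}/K)$. The correspondence between $H^1(K,M)$ and étale algebras is: a coclass represented by a crossed homomorphism $\sigma:G_K\to M$ corresponds to the étale $K$-algebra $L$ of degree $|M|$ whose coordinates (the $K$-algebra maps $L\to K^{\mathrm{sep}}$) admit a labeling $\{\iota_x\}_{x\in M}$ with $g\circ\iota_x=\iota_{\phi(g)x+\sigma(g)}$ for all $g\in G_K$; this is the $(\operatorname{Hol}M)$-extension associated to $G_K\to\operatorname{Hol}M=M\rtimes\operatorname{Aut}M$, $g\mapsto(x\mapsto\phi(g)x+\sigma(g))$, where $\operatorname{Hol}M$ is the group of affine bijections of $M$. *)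

(* Defs.v *)
From HB Require Import structures.
From mathcomp Require Import all_boot all_order all_algebra all_field.
Set Implicit Arguments. Unset Strict Implicit. Unset Printing Implicit Defensive.
Import GRing.Theory.
Local Open Scope ring_scope.

Definition is_sep_closure (K Om : fieldType) (j : {rmorphism K -> Om}) : Prop :=
  (forall x : Om, exists p : {poly K},
      [/\ p != 0, separable_poly p & root (map_poly j p) x]) /\
  (forall p : {poly Om}, separable_poly p -> (1 < size p)%N ->
      exists x, root p x).

Definition is_GK (K Om : fieldType) (j : K -> Om) (g : Om -> Om) : Prop :=
  [/\ g 1 = 1, forall x y, g (x + y) = g x + g y,
      forall x y, g (x * y) = g x * g y, bijective g
    & forall k, g (j k) = j k].

(* Continuity (local constancy) of a map from G_K (Krull topology) into a
   discrete set: a basic neighbourhood of g consists of the h agreeing with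
   g on a finite subset of Omega. *)
Definition GK_continuous (K Om : fieldType) (j : K -> Om) (T : Type)
    (f : (Om -> Om) -> T) : Prop :=
  forall g, is_GK j g -> exists s : seq Om, forall h, is_GK j h ->
    (forall x, x \in s -> h x = g x) -> f h = f g.

Definition galois_module (K Om : fieldType) (j : K -> Om) (M : finZmodType)
    (phi : (Om -> Om) -> M -> M) : Prop :=
  [/\ forall g, is_GK j g -> bijective (phi g),
      forall g, is_GK j g -> forall a b, phi g (a + b) = phi g a + phi g b,
      forall g h, is_GK j g -> is_GK j h -> phi (g \o h) =1 phi g \o phi h,
      phi id =1 id
    & GK_continuous j phi].

Definition crossed_hom (K Om : fieldType) (j : K -> Om) (M : finZmodType)
    (phi : (Om -> Om) -> M -> M) (s : (Om -> Om) -> M) : Prop :=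
  (forall g h, is_GK j g -> is_GK j h -> s (g \o h) = s g + phi g (s h)) /\
  GK_continuous j s.

Definition cohomologous (K Om : fieldType) (j : K -> Om) (M : finZmodType)
    (phi : (Om -> Om) -> M -> M) (s t : (Om -> Om) -> M) : Prop :=
  exists m : M, forall g, is_GK j g -> t g = s g + phi g m - m.

Definition Kalg_hom_to (K Om : fieldType) (j : K -> Om) (A : falgType K)
    (f : A -> Om) : Prop :=
  [/\ f 1 = 1, forall x y, f (x + y) = f x + f y,
      forall x y, f (x * y) = f x * f y
    & forall (k : K) x, f (k *: x) = j k * f x].

Definition Kalg_hom (K : fieldType) (A B : falgType K) (f : A -> B) : Prop :=
  [/\ f 1 = 1, forall x y, f (x + y) = f x + f y,
      forall x y, f (x * y) = f x * f y
    & forall (k : K) x, f (k *: x) = k *: f x].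

(* The etale K-algebra L corresponds to the cocycle s: deg L = |M| and its
   coordinates (K-algebra maps L -> Omega) admit a labeling (iota_x)_{x in M}
   (a bijection from M to the set of coordinates) with
   g o iota_x = iota_{phi(g) x + s(g)}. *)
Definition corresponds (K Om : fieldType) (j : K -> Om) (M : finZmodType)
    (phi : (Om -> Om) -> M -> M) (L : falgType K) (s : (Om -> Om) -> M) : Prop :=
  \dim (fullv : {vspace L}) = #|M| /\
  exists iota : M -> L -> Om,
    [/\ forall x, Kalg_hom_to j (iota x),
        forall x y, iota x =1 iota y -> x = y,
        forall f, Kalg_hom_to j f -> exists x, f =1 iota x
      & forall g, is_GK j g -> forall x,
          g \o iota x =1 iota (phi g x + s g)].

Definition corresponds_class (K Om : fieldType) (j : K -> Om) (M : finZmodType)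
    (phi : (Om -> Om) -> M -> M) (L : falgType K) (s : (Om -> Om) -> M) : Prop :=
  exists t, cohomologous j phi s t /\ corresponds j phi L t.

Definition is_tensor (K : fieldType) (L1 L2 T : falgType K)
    (i1 : L1 -> T) (i2 : L2 -> T) : Prop :=
  [/\ Kalg_hom i1, Kalg_hom i2,
      forall a b, i1 a * i2 b = i2 b * i1 a
    & basis_of (fullv : {vspace T})
        [seq i1 a * i2 b | a <- (vbasis (fullv : {vspace L1}) : seq L1),
                           b <- (vbasis (fullv : {vspace L2}) : seq L2)]].

(* Main.v *)
Require Import Defs.
From HB Require Import structures.
From mathcomp Require Import all_boot all_order all_algebra all_field.
From mathcomp Require Import boolp.
From mathcomp Require classical_sets.
Import GRing.Theory.
Local Open Scope ring_scope.

Set Implicit Arguments. Unset Strict Implicit. Unset Printing Implicit Defensive.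

Section SubF.
Variables (Om : fieldType) (S : divringClosed Om).
Inductive subF := mkSF x & x \in S.
Definition vSF u := let: mkSF x _ := u in x.
HB.instance Definition _ := [isSub for vSF].
HB.instance Definition _ := [Choice of subF by <:].
HB.instance Definition _ := [SubChoice_isSubIntegralDomain of subF by <:].
HB.instance Definition _ := [SubIntegralDomain_isSubField of subF by <:].
End SubF.

Section Galois.
Variables (K Om : fieldType) (j : {rmorphism K -> Om}).

Definition is_subfield (D : Om -> Prop) :=
  [/\ forall k, D (j k), forall x y, D x -> D y -> D (x - y),
      forall x y, D x -> D y -> D (x * y) & forall x, D x -> D x^-1].
Definition is_emb (D : Om -> Prop) (s : Om -> Om) :=
  [/\ forall k, s (j k) = j k, forall x y, D x -> D y -> s (x - y) = s x - s y
    & forall x y, D x -> D y -> s (x * y) = s x * s y].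

Definition Dp (D : Om -> Prop) : {pred Om} := fun x => `[< D x >].

Lemma Dp_closed D : is_subfield D -> divring_closed (Dp D).
Proof.
case=> Dj DB DM DV; split.
- by apply/asboolP; rewrite -(rmorph1 j); apply: Dj.
- by move=> x y /asboolP Dx /asboolP Dy; apply/asboolP; apply: DB.
- by move=> x y /asboolP Dx /asboolP Dy; apply/asboolP; apply: DM => //; apply: DV.
Qed.

Definition DS D (hD : is_subfield D) : divringClosed Om :=
  HB.pack (Dp D) (GRing.isDivringClosed.Build Om (Dp D) (Dp_closed hD)).

Definition FD D (hD : is_subfield D) : fieldType := subF (DS hD).

Lemma FD_val D (hD : is_subfield D) (u : FD hD) : D (val u).
Proof. by case: u => x /= /asboolP. Qed.

Definition sigF D (hD : is_subfield D) s (hs : is_emb D s) : FD hD -> Om :=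
  fun u => s (val u).

Lemma sigF_zmod D (hD : is_subfield D) s (hs : is_emb D s) : zmod_morphism (@sigF D hD s hs).
Proof.
by move=> u v; rewrite /sigF rmorphB; case: hs => _ hB _; apply: hB; apply: FD_val.
Qed.

Lemma sigF_monoid D (hD : is_subfield D) s (hs : is_emb D s) : monoid_morphism (@sigF D hD s hs).
Proof.
split; rewrite /sigF.
  by rewrite rmorph1; case: hs => hj _ _; rewrite -(rmorph1 j) hj.
by move=> u v; rewrite rmorphM; case: hs => _ _ hM; apply: hM; apply: FD_val.
Qed.

HB.instance Definition _ D hD s hs := GRing.isZmodMorphism.Build _ _ (@sigF D hD s hs) (@sigF_zmod D hD s hs).
HB.instance Definition _ D hD s hs := GRing.isMonoidMorphism.Build _ _ (@sigF D hD s hs) (@sigF_monoid D hD s hs).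

Hypothesis Hsep : is_sep_closure j.

Section Step.
Variables (D : Om -> Prop) (hD : is_subfield D) (s : Om -> Om) (hs : is_emb D s).
Local Notation F := (FD hD).
Local Notation sF := (@sigF D hD s hs).

Lemma memDS x : D x -> x \in DS hD.
Proof. by move=> Dx; apply/asboolP. Qed.

Definition kF (k : K) : F := Sub (j k) (memDS (let: And4 h _ _ _ := hD in h k)).

Lemma kFK k : val (kF k) = j k.
Proof. by rewrite /kF SubK. Qed.

Lemma kF_zmod : zmod_morphism kF.
Proof. by move=> a b; apply: val_inj; rewrite rmorphB !kFK rmorphB. Qed.
Lemma kF_monoid : monoid_morphism kF.
Proof.
split; first by apply: val_inj; rewrite rmorph1 kFK rmorph1.
by move=> a b; apply: val_inj; rewrite rmorphM !kFK rmorphM.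
Qed.
HB.instance Definition _ := GRing.isZmodMorphism.Build _ _ kF kF_zmod.
HB.instance Definition _ := GRing.isMonoidMorphism.Build _ _ kF kF_monoid.

Lemma sF_kF k : sF (kF k) = j k.
Proof. by rewrite /sigF kFK; case: hs. Qed.

Lemma map_val_kF (q : {poly K}) : map_poly val (map_poly kF q) = map_poly j q.
Proof. by rewrite -map_poly_comp; apply: eq_map_poly => k /=; rewrite ?kFK. Qed.

Lemma map_sF_kF (q : {poly K}) : map_poly sF (map_poly kF q) = map_poly j q.
Proof. by rewrite -map_poly_comp; apply: eq_map_poly => k /=; rewrite ?sF_kF. Qed.

Lemma hvC (c : F) x : (map_poly val c%:P).[x] = val c.
Proof. by rewrite map_polyC hornerC. Qed.
Lemma hsC (c : F) x : (map_poly sF c%:P).[x] = sF c.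
Proof. by rewrite map_polyC hornerC. Qed.

Variable z : Om.

Lemma minpoly_ex : exists p : {poly F},
  [/\ p \is monic, root (map_poly val p) z &
      forall R, root (map_poly val R) z -> p %| R].
Proof.
have [q [q0 _ qz]] := Hsep.1 z.
pose P n := `[< exists R : {poly F}, [/\ R != 0, root (map_poly val R) z & size R = n] >].
have exP : exists n, P n.
  exists (size (map_poly kF q)); apply/asboolP; exists (map_poly kF q); split => //.
    by rewrite map_poly_eq0.
  by rewrite map_val_kF.
case: (ex_minnP exP) => n /asboolP [R [R0 Rz <-]] Rmin.
have lc0 : lead_coef R != 0 by rewrite lead_coef_eq0.
exists ((lead_coef R)^-1 *: R); split.
- by rewrite monicE lead_coefZ mulVf.
- by rewrite /root linearZ /= hornerZ (eqP Rz) mulr0.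
set p := (lead_coef R)^-1 *: R.
have p0 : p != 0 by rewrite scale_poly_eq0 negb_or invr_eq0 lc0 R0.
have sp : size p = size R by rewrite size_scale ?invr_eq0.
have pz : root (map_poly val p) z.
  by rewrite /root linearZ /= hornerZ (eqP Rz) mulr0.
move=> R' R'z; apply/modp_eq0P; apply/eqP; apply: contraT => r0.
have Hlt : (size (R' %% p)%R < size R)%N by rewrite -sp ltn_modp.
suff Hle : (size R <= size (R' %% p)%R)%N by move: Hlt; rewrite ltnNge Hle.
apply: Rmin; apply/asboolP.
exists (R' %% p); split => //.
move: R'z; rewrite {1}(divp_eq R' p) /root.
rewrite rmorphD rmorphM /= hornerD hornerM (eqP pz).
by rewrite mulr0 add0r.
Qed.


Section Min.
Variable p : {poly F}.
Hypotheses (pmon : p \is monic) (pz : root (map_poly val p) z)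
  (pdiv : forall R, root (map_poly val R) z -> p %| R).

Lemma p0 : p != 0.
Proof. by apply: contraTneq pmon => ->; rewrite monicE lead_coef0 eq_sym oner_eq0. Qed.

Lemma size_p_gt1 : (1 < size p)%N.
Proof.
case: (ltnP 1 (size p)) => // /size1_polyC pE.
move: pz pmon; move: (p`_0) pE => c -> ; rewrite monicE lead_coefC => + /eqP ce.
by rewrite ce map_polyC /root hornerC; move: (rmorph1 (val : {rmorphism FD hD -> Om})) => /= ->; rewrite oner_eq0.
Qed.

Lemma sep_pval : separable_poly (map_poly val p).
Proof.
have [q [q0 qsep qz]] := Hsep.1 z.
apply: (@dvdp_separable _ (map_poly j q)); last by rewrite separable_map.
by rewrite -map_val_kF dvdp_map; apply: pdiv; rewrite map_val_kF.
Qed.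

Lemma root_ex : exists w, root (map_poly sF p) w.
Proof.
have [q [q0 qsep qz]] := Hsep.1 z.
apply: Hsep.2; last by rewrite size_map_poly size_p_gt1.
apply: (@dvdp_separable _ (map_poly j q)); last by rewrite separable_map.
by rewrite -map_sF_kF dvdp_map; apply: pdiv; rewrite map_val_kF.
Qed.

Lemma D0 : D 0.
Proof. by case: hD => Dj _ _ _; rewrite -(rmorph0 j). Qed.

Lemma DN x : D x -> D (- x).
Proof. by case: hD => _ DB _ _ Dx; rewrite -sub0r; apply: DB => //; apply: D0. Qed.

Lemma root_ne : ~ D z -> exists y, root (map_poly val p) y /\ y != z.
Proof.
move=> nDz.
have s3 : (2 < size p)%N.
  case: (ltnP 2 (size p)) => // hle.
  have s2 : size p = 2 by apply/eqP; rewrite eqn_leq hle size_p_gt1.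
  have lc : p`_1 = 1 by move: pmon; rewrite monicE /lead_coef s2 => /eqP.
  exfalso; apply: nDz.
  move: pz; rewrite /root horner_coef size_map_poly s2 big_ord_recr big_ord1 /=.
  rewrite !coef_map_id0 ?rmorph0 // lc; have v1 : vSF (1 : F) = 1 := rmorph1 val.
  rewrite v1 expr0 expr1 mulr1 mul1r addrC addr_eq0 => /eqP ->.
  by apply: DN; exact: (FD_val (p`_0)).
have [h hE] := factor_theorem _ _ pz.
have h0 : h != 0.
  by apply: contraTneq p0 => h0; rewrite negbK -(map_poly_eq0 val) hE h0 mul0r.
have sh : size h = (size p).-1.
  by rewrite -(size_map_poly val) hE size_Mmonic ?monicXsubC // size_XsubC addn2.
have sep_h : separable_poly h.
  by apply: dvdp_separable sep_pval; rewrite hE dvdp_mulIl.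
have [y hy] := Hsep.2 h sep_h (ltac:(rewrite sh; case: (size p) s3 => [|[|[|n]]] //)).
exists y; split; first by rewrite hE rootM hy.
apply/eqP => yz; subst y.
have [h' h'E] := factor_theorem _ _ hy.
have := separable_nosquare (k := 2) (u := 'X - z%:P) sep_pval (isT : (1 < 2)%N).
by rewrite size_XsubC /= hE h'E -mulrA -expr2 dvdp_mull // => /(_ isT).
Qed.

Variable w : Om.
Hypothesis hw : root (map_poly sF p) w.

Definition D' (u : Om) := exists P : {poly F}, u = (map_poly val P).[z].
Definition s' (u : Om) : Om :=
  match pselect (D' u) with
  | left h => (map_poly sF (sval (cid h))).[w]
  | right _ => 0 end.

Lemma wdef P Q : (map_poly val P).[z] = (map_poly val Q).[z] ->
  (map_poly sF P).[w] = (map_poly sF Q).[w].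
Proof.
move=> e; have : root (map_poly val (P - Q)) z.
  by rewrite /root rmorphB /= hornerD hornerN e subrr.
move/pdiv; rewrite -(dvdp_map sF) => /dvdpP [r rE].
apply/eqP; rewrite -subr_eq0 -hornerN -hornerD -rmorphB /= rE hornerM.
by rewrite (eqP hw) mulr0.
Qed.

Lemma s'E P : s' ((map_poly val P).[z]) = (map_poly sF P).[w].
Proof.
rewrite /s'; case: pselect => [h|nh]; last by exfalso; apply: nh; exists P.
by case: (cid h) => Q /= hQ; apply: wdef; rewrite -hQ.
Qed.

Lemma D'B x y : D' x -> D' y -> D' (x - y).
Proof. by move=> [P ->] [Q ->]; exists (P - Q); rewrite rmorphB /= hornerD hornerN. Qed.
Lemma D'M x y : D' x -> D' y -> D' (x * y).
Proof. by move=> [P ->] [Q ->]; exists (P * Q); rewrite rmorphM /= hornerM. Qed.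
Lemma D'j k : D' (j k).
Proof. by exists (kF k)%:P; rewrite hvC kFK. Qed.
Lemma D'D x : D x -> D' x.
Proof.
move=> Dx; exists (Sub x (memDS Dx) : F)%:P.
by rewrite hvC SubK.
Qed.

Lemma D'V x : D' x -> D' x^-1.
Proof.
move=> Dx; have [->|x0] := eqVneq x 0; first by rewrite invr0 -(rmorph0 j); apply: D'j.
have [q [q0 _ qx]] := Hsep.1 x.
have [m [q' nq' qE]] := multiplicity_XsubC q 0.
move: nq'; rewrite q0 /= => nq'.
have q'x : root (map_poly j q') x.
  move: qx; rewrite qE rmorphM rmorphXn rmorphB /= map_polyX map_polyC.
  rewrite /root hornerM horner_exp hornerXsubC [X in x - X](_ : _ = 0); last by apply: rmorph0.
  by rewrite subr0 mulf_eq0 expf_eq0 (negPf x0) andbF orbF.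
set c := q'.[0].
have jc0 : j c != 0 by rewrite fmorph_eq0.
have eq0 := divp_eq q' ('X - 0%:P); rewrite modp_XsubC -/c in eq0.
set r := q' %/ ('X - 0%:P) in eq0.
have e : (map_poly j r).[x] * x + j c = 0.
  move: q'x; rewrite eq0 rmorphD rmorphM rmorphB /= map_polyX !map_polyC /root.
  rewrite hornerD hornerM hornerXsubC hornerC [X in x - X](_ : _ = 0) ?subr0 => [/eqP //|]; by apply: rmorph0.
have -> : x^-1 = - (map_poly j r).[x] * (j c)^-1.
  have e' : - (x * (map_poly j r).[x]) = j c.
    by rewrite mulrC; apply/esym/eqP; rewrite -addr_eq0 addrC e.
  by apply: (mulfI x0); rewrite mulfV // mulrA mulrN e' mulfV.
have [P ->] := Dx.
rewrite -fmorphV -horner_comp -map_val_kF -map_comp_poly.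
apply: D'M; last by apply: D'j.
rewrite -sub0r; apply: D'B; first by exists 0; rewrite rmorph0 horner0.
by eexists.
Qed.

Lemma D'_subfield : is_subfield D'.
Proof. by split; [apply: D'j | apply: D'B | apply: D'M | apply: D'V]. Qed.

Lemma s'_emb : is_emb D' s'.
Proof.
split.
- move=> k; have jk : j k = (map_poly val (kF k)%:P).[z] by rewrite hvC kFK.
  by rewrite {1}jk s'E hsC sF_kF.
- move=> x y [P ->] [Q ->]; rewrite -hornerN -hornerD -rmorphB !s'E.
  by rewrite rmorphB /= hornerD hornerN.
- move=> x y [P ->] [Q ->]; rewrite -hornerM -rmorphM !s'E.
  by rewrite rmorphM /= hornerM.
Qed.

Lemma s'_ext x : D x -> s' x = s x.
Proof.
move=> Dx; have xE : x = (map_poly val (Sub x (memDS Dx) : F)%:P).[z].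
  by rewrite hvC SubK.
by rewrite {1}xE s'E hsC /sigF SubK.
Qed.

Lemma D'z : D' z.
Proof. by exists 'X; rewrite map_polyX hornerX. Qed.

Lemma s'z : s' z = w.
Proof.
have zE : z = (map_poly (val : F -> Om) 'X).[z] by rewrite map_polyX hornerX.
by rewrite {1}zE s'E map_polyX hornerX.
Qed.

End Min.

Lemma ext_step : exists D2 s2, [/\ is_subfield D2, is_emb D2 s2,
  forall x, D x -> D2 x, forall x, D x -> s2 x = s x & D2 z].
Proof.
have [p [pm pz pd]] := minpoly_ex.
have [w hw] := root_ex pm pz pd.
exists D', (s' w); split.
- exact: D'_subfield.
- exact: (s'_emb pd hw).
- exact: D'D.
- exact: (s'_ext pd hw).
- exact: D'z.
Qed.

Lemma ext_step_ne : (forall x, D x -> s x = x) -> ~ D z -> exists D2 s2, [/\ is_subfield D2, is_emb D2 s2,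
  forall x, D x -> D2 x, forall x, D x -> s2 x = s x & D2 z /\ s2 z != z].
Proof.
move=> sid nDz.
have [p [pm pz pd]] := minpoly_ex.
have [y [hy yz]] := root_ne pm pz pd nDz.
have hw : root (map_poly sF p) y.
  suff -> : map_poly sF p = map_poly val p by [].
  by apply: eq_map_poly => u; rewrite /sigF sid //; apply: FD_val.
exists D', (s' y); split.
- exact: D'_subfield.
- exact: (s'_emb pd hw).
- exact: D'D.
- exact: (s'_ext pd hw).
- by split; [exact: D'z | rewrite (s'z pd hw)].
Qed.

End Step.

Record pemb := PE { pD : Om -> Prop; ps : Om -> Om;
  pDf : is_subfield pD; psE : is_emb pD ps }.

Definition pext (a b : pemb) :=
  (forall x, pD a x -> pD b x) /\ (forall x, pD a x -> ps b x = ps a x).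

Lemma full_ext (a : pemb) : exists g : Om -> Om,
  is_emb (fun _ => True) g /\ forall x, pD a x -> g x = ps a x.
Proof.
pose T := {e : pemb | pext a e}.
have a0 : pext a a by split.
pose R (u v : T) := `[< pext (sval u) (sval v) >].
have [|||t tmax] := @classical_sets.ZL_preorder T (exist _ a a0) R.
- by move=> u; apply/asboolP; split.
- move=> u v w /asboolP [uv1 uv2] /asboolP [vw1 vw2]; apply/asboolP; split.
    by move=> x /uv1 /vw1.
  by move=> x hx; rewrite vw2 ?uv2 //; apply: uv1.
- move=> A Atot.
  case: (pselect (exists u, A u)) => [[u0 Au0]|nA]; last first.
    by exists (exist _ a a0) => u Au; exfalso; apply: nA; exists u.
  pose DU x := exists u, A u /\ pD (sval u) x.
  pose sU x := match pselect (DU x) with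
               | left h => ps (sval (sval (cid h))) x | right _ => 0 end.
  have sUE u x : A u -> pD (sval u) x -> sU x = ps (sval u) x.
    move=> Au hx; rewrite /sU; case: pselect => [h|nh]; last by exfalso; apply: nh; exists u.
    case: (cid h) => v /= [Av hv].
    case: (Atot u v Au Av) => /asboolP [h1 h2]; first by rewrite h2.
    by rewrite h2.
  have common x y : DU x -> DU y -> exists u, [/\ A u, pD (sval u) x & pD (sval u) y].
    move=> [u [Au hu]] [v [Av hv]].
    case: (Atot u v Au Av) => /asboolP [h1 h2].
      by exists v; split => //; apply: h1.
    by exists u; split => //; apply: h1.
  have DUf : is_subfield DU.
    split.
    - move=> k; exists u0; split => //; by case: (pDf (sval u0)).
    - move=> x y hx hy; have [u [Au ux uy]] := common x y hx hy.
      by exists u; split => //; case: (pDf (sval u)) => _ hB _ _; apply: hB.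
    - move=> x y hx hy; have [u [Au ux uy]] := common x y hx hy.
      by exists u; split => //; case: (pDf (sval u)) => _ _ hM _; apply: hM.
    - move=> x [u [Au ux]]; exists u; split => //.
      by case: (pDf (sval u)) => _ _ _ hV; apply: hV.
  have sUe : is_emb DU sU.
    split.
    - move=> k; have h : pD (sval u0) (j k) by case: (pDf (sval u0)).
      by rewrite (sUE u0) //; case: (psE (sval u0)).
    - move=> x y hx hy; have [u [Au ux uy]] := common x y hx hy.
      have uxy : pD (sval u) (x - y) by case: (pDf (sval u)) => _ hB _ _; apply: hB.
      rewrite !(sUE u) //; by case: (psE (sval u)) => _ hB _; apply: hB.
    - move=> x y hx hy; have [u [Au ux uy]] := common x y hx hy.
      have uxy : pD (sval u) (x * y) by case: (pDf (sval u)) => _ _ hM _; apply: hM.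
      rewrite !(sUE u) //; by case: (psE (sval u)) => _ _ hM; apply: hM.
  pose U := PE DUf sUe.
  have aU : pext a U.
    split.
    - move=> x hx; exists u0; split => //; by case: (svalP u0) => h1 _; apply: h1.
    - move=> x hx /=; have ux : pD (sval u0) x by case: (svalP u0) => h1 _; apply: h1.
      by rewrite (sUE u0) //; case: (svalP u0) => _ h2; apply: h2.
  exists (exist _ U aU) => u Au; apply/asboolP; split.
  + by move=> x hx; exists u.
  + by move=> x hx /=; rewrite (sUE u).
have full : forall z, pD (sval t) z.
  move=> z; apply: contrapT => nz.
  have [D2 [s2 [D2f s2e h1 h2 h3]]] := ext_step (pDf (sval t)) (psE (sval t)) z.
  pose V := PE D2f s2e.
  have tV : pext (sval t) V by split.
  have aV : pext a V.
    case: (svalP t) => a1 a2; split; first by move=> x /a1 /h1.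
    by move=> x hx /=; rewrite h2 ?a2 //; apply: a1.
  have : R t (exist _ V aV) by apply/asboolP.
  by move/tmax => /asboolP [+ _] => /(_ z h3).
exists (ps (sval t)); split.
  case: (psE (sval t)) => hj hB hM; split => //.
  - by move=> x y _ _; apply: hB; apply: full.
  - by move=> x y _ _; apply: hM; apply: full.
by case: (svalP t) => _ h2.
Qed.

Section Full.
Variable g : Om -> Om.
Hypothesis hg : is_emb (fun _ => True) g.

Lemma g0 : g 0 = 0.
Proof. by case: hg => _ hB _; move: (hB 0 0 I I); rewrite !subrr. Qed.
Lemma gB x y : g (x - y) = g x - g y.
Proof. by case: hg => _ hB _; apply: hB. Qed.
Lemma gM x y : g (x * y) = g x * g y.
Proof. by case: hg => _ _ hM; apply: hM. Qed.
Lemma gj k : g (j k) = j k.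
Proof. by case: hg. Qed.
Lemma g1 : g 1 = 1.
Proof. by rewrite -(rmorph1 j) gj. Qed.
Lemma gN x : g (- x) = - g x.
Proof. by rewrite -sub0r gB g0 sub0r. Qed.
Lemma gD x y : g (x + y) = g x + g y.
Proof. have -> : x + y = x - (- y) by rewrite opprK.
by rewrite gB gN opprK. Qed.
Lemma gX x n : g (x ^+ n) = g x ^+ n.
Proof. by elim: n => [|n IH]; rewrite ?expr0 ?g1 // !exprS gM IH. Qed.

Lemma g_inj : injective g.
Proof.
move=> x y e; apply/eqP; rewrite -subr_eq0; apply/negP => /negP nz.
have : g ((x - y) * (x - y)^-1) = 0 by rewrite gM gB e subrr mul0r.
by rewrite mulfV // g1 => /eqP; rewrite oner_eq0.
Qed.

Lemma g_horner (q : {poly K}) x : g ((map_poly j q).[x]) = (map_poly j q).[g x].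
Proof.
rewrite !horner_coef.
rewrite (big_morph g gD g0); apply: eq_bigr => i _.
by rewrite gM gX coef_map /= gj.
Qed.

Lemma g_surj y : exists x, g x = y.
Proof.
have [q [q0 _ qy]] := Hsep.1 y.
set Q := map_poly j q.
have Q0 : Q != 0 by rewrite map_poly_eq0.
pose P n := `[< exists rs, [/\ uniq rs, all (root Q) rs & size rs = n] >].
have exP : exists n, P n by exists 0%N; apply/asboolP; exists [::].
have ubP : forall n, P n -> (n <= size Q)%N.
  move=> n /asboolP [rs [u a <-]]; apply: ltnW; exact: max_poly_roots.
case: (ex_maxnP exP ubP) => n /asboolP [rs [urs ars srs]] nmax.
have Qg r : root Q r -> root Q (g r).
  by rewrite /root /Q -g_horner => /eqP ->; rewrite g0.
have allin r : root Q r -> r \in rs.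
  move=> Qr; apply: contraT => nr.
  have : P (size (r :: rs)).
    by apply/asboolP; exists (r :: rs); split => //=; [rewrite nr urs | rewrite Qr ars].
  by move/nmax; rewrite /= srs ltnn.
have [_ eqs] := @uniq_min_size _ (map g rs) rs
  (ltac:(by rewrite map_inj_uniq //; apply: g_inj))
  (ltac:(move=> x /mapP [r rin ->]; apply: allin; apply: Qg; exact: (allP ars r rin)))
  (ltac:(by rewrite size_map)).
have := allin y qy; rewrite -eqs => /mapP [x _ ->]; by exists x.
Qed.

Lemma g_GK : is_GK j g.
Proof.
split.
- exact: g1.
- exact: gD.
- exact: gM.
- pose h y := sval (cid (g_surj y)).
  exists h => [x|y]; rewrite /h; case: (cid _) => //= x' e.
  by apply: g_inj.
- exact: gj.
Qed.

End Full.

Lemma fixed_field (c : Om) : (forall g, is_GK j g -> g c = c) -> exists k, c = j k.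
Proof.
move=> hc; apply: contrapT => nc.
pose D0 x := exists k, x = j k.
have D0f : is_subfield D0.
  split.
  - by move=> k; exists k.
  - by move=> x y [a ->] [b ->]; exists (a - b); rewrite rmorphB.
  - by move=> x y [a ->] [b ->]; exists (a * b); rewrite rmorphM.
  - by move=> x [a ->]; exists a^-1; rewrite fmorphV.
have s0e : is_emb D0 id by split.
have [D1 [s1 [D1f s1e h1 h2 [h3 h4]]]] := @ext_step_ne D0 D0f id s0e c (fun x _ => erefl) nc.
have [g [hg gE]] := full_ext (PE D1f s1e).
have := hc g (g_GK hg); rewrite gE //= => e.
by move: h4; rewrite e eqxx.
Qed.

End Galois.

Section Lin.
Variables (K Om : fieldType) (j : {rmorphism K -> Om}).

Definition jlin (A : falgType K) (f : A -> Om) :=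
  (forall x y, f (x + y) = f x + f y) /\ (forall k x, f (k *: x) = j k * f x).

Lemma jlin0 (A : falgType K) (f : A -> Om) : jlin f -> f 0 = 0.
Proof. by case=> _ hZ; rewrite -(scale0r 0) hZ rmorph0 mul0r. Qed.

Lemma jlin_sum (A : falgType K) (f : A -> Om) (I : Type) (r : seq I) (P : pred I) F :
  jlin f -> f (\sum_(i <- r | P i) F i) = \sum_(i <- r | P i) f (F i).
Proof. by move=> hf; apply: (big_morph f hf.1 (jlin0 hf)). Qed.

Lemma jlinN (A : falgType K) (f : A -> Om) x : jlin f -> f (- x) = - f x.
Proof. by move=> hf; rewrite -scaleN1r hf.2 rmorphN1 mulN1r. Qed.

Lemma hom_jlin (A : falgType K) (f : A -> Om) : Kalg_hom_to j f -> jlin f.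
Proof. by case. Qed.

Lemma basis_span (A : falgType K) (X : seq A) : basis_of fullv X -> forall v, v \in <<X>>%VS.
Proof. by case/andP => /eqP -> _ v; apply: memvf. Qed.

Lemma jlin_expand (A : falgType K) (X : seq A) (f : A -> Om) v : jlin f ->
  v \in <<X>>%VS ->
  f v = \sum_(i < size X) j (coord (in_tuple X) i v) * f X`_i.
Proof.
move=> hf hv; rewrite {1}(coord_span (X := in_tuple X) hv) jlin_sum //.
by apply: eq_bigr => i _; rewrite hf.2.
Qed.

Lemma jlin_span (A : falgType K) (X : seq A) (f g : A -> Om) :
  jlin f -> jlin g -> (forall v, v \in <<X>>%VS) ->
  (forall u, u \in X -> f u = g u) -> f =1 g.
Proof.
move=> hf hg hX hfg v; rewrite (jlin_expand hf (hX v)) (jlin_expand hg (hX v)).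
by apply: eq_bigr => i _; rewrite hfg // mem_nth.
Qed.

Lemma dedekind (A : falgType K) (I : finType) (chi : I -> A -> Om) :
  (forall i, Kalg_hom_to j (chi i)) -> (forall i i', chi i =1 chi i' -> i = i') ->
  forall c : I -> Om, (forall a, \sum_i c i * chi i a = 0) -> forall i, c i = 0.
Proof.
move=> hom dist.
suff H : forall n (c : I -> Om), (#|[set i | (c i != 0)%R]| <= n)%N ->
    (forall a, \sum_i c i * chi i a = 0) -> forall i, c i = 0.
  by move=> c; apply: (H _ c (leqnn _)).
elim=> [|n IH] c hc hsum i.
  apply/eqP; apply: contraT => ci; move: hc; rewrite leqn0 cards_eq0 => /eqP/setP/(_ i).
  by rewrite !inE ci.
apply/eqP; apply: contraT => ci.
have hz : forall i', i' != i -> c i' = 0.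
  move=> i' ne.
  suff hb : forall b, c i' * (chi i' b - chi i b) = 0.
    apply/eqP; apply: contraT => ci'.
    have := dist i' i => /(_ _) ei; move: ne; rewrite ei ?eqxx // => b.
    by move: (hb b) => /eqP; rewrite mulf_eq0 (negPf ci') subr_eq0 => /eqP.
  move=> b; pose c' k := c k * (chi k b - chi i b).
  apply: (IH c').
  - have sub : [set k | c' k != 0] \subset [set k | c k != 0] :\ i.
      apply/subsetP => k; rewrite !inE /c' mulf_eq0 negb_or => /andP [ck dk].
      rewrite ck andbT; apply: contra dk => /eqP ->; by rewrite subrr.
    apply: (leq_trans (subset_leq_card sub)).
    have := cardsD1 i [set k | c k != 0]; rewrite inE ci /= add1n => e.
    by move: hc; rewrite e ltnS.
  - move=> a.
    have e : forall k, c' k * chi k a = c k * chi k (b * a) - chi i b * (c k * chi k a).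
      move=> k; rewrite /c'; case: (hom k) => _ _ hM _; rewrite hM.
      by rewrite mulrBr mulrBl !mulrA (mulrC (c k) (chi i b)).
    rewrite (eq_bigr _ (fun k _ => e k)) sumrB -mulr_sumr.
    by rewrite hsum hsum mulr0 subr0.
have := hsum 1; rewrite (bigD1 i) //= big1 ?addr0.
  by case: (hom i) => h1 _ _ _; rewrite h1 mulr1 => /eqP; rewrite (negPf ci).
move=> k ki; by rewrite hz ?mul0r.
Qed.

Section Mat.
Variable A : falgType K.
Local Notation dA := (\dim (fullv : {vspace A})).
Local Notation e := (vbasis (fullv : {vspace A})).
Variable chi : 'I_dA -> A -> Om.
Hypotheses (hom : forall i, Kalg_hom_to j (chi i))
           (dist : forall i i', chi i =1 chi i' -> i = i').

Definition Psi : 'M[Om]_dA := \matrix_(r, k) chi r e`_k.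

Lemma e_span v : v \in <<(e : seq A)>>%VS.
Proof. exact: basis_span (vbasisP fullv) v. Qed.

Lemma chi_expand r v : chi r v = \sum_(k < dA) j (coord e k v) * chi r e`_k.
Proof.
rewrite {1}(coord_span (e_span v)) jlin_sum; last exact: hom_jlin.
by apply: eq_bigr => k _; case: (hom r) => _ _ _ hZ; rewrite hZ.
Qed.

Lemma Psi_unit : Psi \in unitmx.
Proof.
rewrite -row_free_unit -kermx_eq0; apply: contraT => /matrix0Pn [r0 [k0 nz]].
pose c r := kermx Psi r0 r.
have hc : forall a, \sum_r c r * chi r a = 0.
  move=> a.
  have h0 : forall k : 'I_dA, \sum_r c r * chi r e`_k = 0.
    move=> k; have := congr1 (fun M : 'M[Om]_dA => M r0 k) (mulmx_ker Psi).
    by rewrite !mxE /= => e0; rewrite -[RHS]e0; apply: eq_bigr => r _; rewrite [Psi _ _]mxE.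
  under eq_bigr => r1 _ do rewrite chi_expand mulr_sumr.
  rewrite exchange_big /= big1 // => k _.
  transitivity (j (coord e k a) * \sum_r c r * chi r e`_k); last by rewrite h0 mulr0.
  rewrite mulr_sumr.
  by apply: eq_bigr => r _; rewrite mulrCA.
by move: nz; have -> : kermx Psi r0 k0 = 0 := dedekind hom dist hc k0; rewrite eqxx.
Qed.

Lemma inj_N a b : (forall r, chi r a = chi r b) -> a = b.
Proof.
move=> hab; apply/eqP; rewrite -subr_eq0; apply/eqP.
set d := a - b.
have hd : forall r, chi r d = 0.
  move=> r; rewrite /d -[a - b]/(a + - b).
  case: (hom r) => _ hD _ _; rewrite hD jlinN ?hab ?subrr //; exact: hom_jlin.
pose u : 'cV[Om]_dA := \col_k j (coord e k d).
have Pu : Psi *m u = 0.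
  apply/matrixP => r z; rewrite !mxE -[RHS](hd r) chi_expand.
  by apply: eq_bigr => k _; rewrite !mxE mulrC.
have u0 : u = 0 by rewrite -(mulKmx Psi_unit u) Pu mulmx0.
rewrite (coord_span (e_span d)) big1 // => k _.
have := congr1 (fun M : 'cV[Om]_dA => M k 0) u0; rewrite !mxE => /eqP.
by rewrite fmorph_eq0 => /eqP ->; rewrite scale0r.
Qed.

Hypothesis FF : forall c, (forall g, is_GK j g -> g c = c) -> exists k, c = j k.

Lemma GK0 g : is_GK j g -> g 0 = 0.
Proof.
case=> _ hD _ _ _; apply/eqP; rewrite -[g 0](addrK (g 0)) -hD addr0 subrr //.
Qed.

Lemma descent_N (v : 'I_dA -> Om) :
  (forall g, is_GK j g -> exists pi : 'I_dA -> 'I_dA,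
     (forall r', exists r, pi r = r') /\
     forall r, (forall a, g (chi r a) = chi (pi r) a) /\ g (v r) = v (pi r)) ->
  exists t, forall r, chi r t = v r.
Proof.
move=> hv.
pose V : 'cV[Om]_dA := \col_r v r.
pose d := invmx Psi *m V.
have Pd : Psi *m d = V by rewrite mulKVmx // Psi_unit.
have fix_d : forall k g, is_GK j g -> g (d k 0) = d k 0.
  move=> k g hg.
  have [pi [pis hpi]] := hv g hg.
  pose d' := map_mx g d.
  suff : Psi *m d' = V.
    by rewrite -Pd => /(congr1 (mulmx (invmx Psi))); rewrite !mulKmx ?Psi_unit //
       => /(congr1 (fun M : 'cV[Om]_dA => M k 0)); rewrite mxE.
  apply/matrixP => r' z; rewrite ord1; have [r <-] := pis r'.
  have := congr1 (fun M : 'cV[Om]_dA => M r 0) Pd; rewrite !mxE => e1.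
  have [h1 h2] := hpi r; rewrite -h2 -e1.
  case: (hg) => _ hD hM _ _.
  rewrite (big_morph g hD (GK0 hg)); apply: eq_bigr => k' _.
  by rewrite !mxE hM h1.
pose kap k := sval (cid (FF (fix_d k))).
have kapE k : d k 0 = j (kap k) by rewrite /kap; case: (cid _).
exists (\sum_k kap k *: e`_k) => r.
rewrite chi_expand.
have := congr1 (fun M : 'cV[Om]_dA => M r 0) Pd; rewrite !mxE => <-.
apply: eq_bigr => k _.
have cs := coord_sum_free kap k (basis_free (vbasisP (fullv : {vspace A}))).
by rewrite cs kapE mxE mulrC.
Qed.

End Mat.

Section Relabel.
Variables (A : falgType K) (I : finType) (chi : I -> A -> Om).
Hypotheses (hI : #|I| = \dim (fullv : {vspace A}))
  (hom : forall i, Kalg_hom_to j (chi i))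
  (dist : forall i i', chi i =1 chi i' -> i = i').
Local Notation dA := (\dim (fullv : {vspace A})).

Definition en (k : 'I_dA) : I := enum_val (cast_ord (esym hI) k).
Definition enr (i : I) : 'I_dA := cast_ord hI (enum_rank i).
Lemma enK : cancel en enr.
Proof. by move=> k; rewrite /en /enr enum_valK cast_ordKV. Qed.
Lemma enrK : cancel enr en.
Proof. by move=> i; rewrite /en /enr cast_ordK enum_rankK. Qed.

Lemma hom' r : Kalg_hom_to j ((chi \o en) r).
Proof. exact: hom. Qed.
Lemma dist' r r' : (chi \o en) r =1 (chi \o en) r' -> r = r'.
Proof. by move=> h; apply: (can_inj enK); apply: dist. Qed.

Lemma inj_I a b : (forall i, chi i a = chi i b) -> a = b.
Proof. by move=> h; apply: (inj_N hom' dist') => r; apply: h. Qed.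

Hypothesis FF : forall c, (forall g, is_GK j g -> g c = c) -> exists k, c = j k.

Lemma descent_I (v : I -> Om) :
  (forall g, is_GK j g -> exists pi : I -> I,
     (forall i', exists i, pi i = i') /\
     forall i, (forall a, g (chi i a) = chi (pi i) a) /\ g (v i) = v (pi i)) ->
  exists t, forall i, chi i t = v i.
Proof.
move=> hv.
have hv' : forall g, is_GK j g -> exists pi : 'I_dA -> 'I_dA,
     (forall r', exists r, pi r = r') /\
     forall r, (forall a, g ((chi \o en) r a) = (chi \o en) (pi r) a) /\
               g ((v \o en) r) = (v \o en) (pi r).
  move=> g hg; have [pi [pis hpi]] := hv g hg.
  exists (enr \o pi \o en); split.
  - move=> r'; have [i hi] := pis (en r'); exists (enr i); by rewrite /= enrK hi enK.
  - move=> r; have [h1 h2] := hpi (en r); split; first by move=> a; rewrite /= h1 enrK.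
    by rewrite /= h2 enrK.
have [t ht] := descent_N hom' dist' FF hv'.
by exists t => i; rewrite -(enrK i); apply: ht.
Qed.

End Relabel.

End Lin.

Section Tensor.
Variables (K Om : fieldType) (j : {rmorphism K -> Om}).
Variables (L1 L2 T : falgType K) (i1 : L1 -> T) (i2 : L2 -> T).
Hypothesis HT : is_tensor i1 i2.

Let A1 : seq L1 := vbasis (fullv : {vspace L1}).
Let B1 : seq L2 := vbasis (fullv : {vspace L2}).
Definition Pp := [seq (a, b) | a <- A1, b <- B1].
Definition X := [seq i1 p.1 * i2 p.2 | p <- Pp].
Definition Xt := in_tuple X.

Lemma X_basis : basis_of fullv X.
Proof. by rewrite /X /Pp map_allpairs; case: HT. Qed.

Lemma i1_hom : Kalg_hom i1. Proof. by case: HT. Qed.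
Lemma i2_hom : Kalg_hom i2. Proof. by case: HT. Qed.

Section Psi.
Variables (f1 : L1 -> Om) (f2 : L2 -> Om).
Hypotheses (hf1 : Kalg_hom_to j f1) (hf2 : Kalg_hom_to j f2).

Definition H := [seq f1 p.1 * f2 p.2 | p <- Pp].
Definition psi (t : T) := \sum_(k < size X) j (coord Xt k t) * H`_k.

Lemma psi_jlin : jlin j psi.
Proof.
split.
- move=> x y; rewrite /psi -big_split; apply: eq_bigr => k _.
  by rewrite linearD /= rmorphD mulrDl.
- move=> c x; rewrite /psi mulr_sumr; apply: eq_bigr => k _.
  by rewrite linearZ /= rmorphM mulrA.
Qed.

Lemma psi_X (k : 'I_(size X)) : psi X`_k = H`_k.
Proof.
rewrite /psi (bigD1 k) //= big1 ?addr0.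
  by rewrite (@coord_free _ _ _ Xt k k) ?eqxx ?rmorph1 ?mul1r // (basis_free X_basis).
move=> k' ne; rewrite (@coord_free _ _ _ Xt k k') ?(basis_free X_basis) //.
by rewrite eq_sym (negPf ne) rmorph0 mul0r.
Qed.

Lemma psi_pair a b : a \in A1 -> b \in B1 -> psi (i1 a * i2 b) = f1 a * f2 b.
Proof.
move=> ha hb.
have hp : (a, b) \in Pp by apply: allpairs_f.
have sk : (index (a, b) Pp < size X)%N by rewrite size_map index_mem.
have := psi_X (Ordinal sk) => /=.
by rewrite /X /H !(nth_map (a, b)) ?index_mem // nth_index.
Qed.

Lemma f_jlin (A : falgType K) (f : A -> Om) : Kalg_hom_to j f -> jlin j f.
Proof. by case. Qed.

Lemma psi_ab a b : psi (i1 a * i2 b) = f1 a * f2 b.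
Proof.
have [_ i1D _ i1Z] := i1_hom; have [_ i2D _ i2Z] := i2_hom.
have [_ p2] := psi_jlin.
have step1 : forall b, b \in B1 -> forall a, psi (i1 a * i2 b) = f1 a * f2 b.
  move=> b' hb'; apply: (@jlin_span _ _ j _ A1).
  - split; first by move=> x y; rewrite i1D mulrDl psi_jlin.1.
    by move=> c x; rewrite i1Z -scalerAl p2.
  - split; first by move=> x y; case: hf1 => _ hD _ _; rewrite hD mulrDl.
    by move=> c x; case: hf1 => _ _ _ hZ; rewrite hZ mulrA.
  - exact: basis_span (vbasisP fullv).
  - by move=> u hu; apply: psi_pair.
move: b; apply: (@jlin_span _ _ j _ B1).
- split; first by move=> x y; rewrite i2D mulrDr psi_jlin.1.
  by move=> c x; rewrite i2Z -scalerAr p2.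
- split; first by move=> x y; case: hf2 => _ hD _ _; rewrite hD mulrDr.
  by move=> c x; case: hf2 => _ _ _ hZ; rewrite hZ mulrCA.
- exact: basis_span (vbasisP fullv).
- by move=> u hu; apply: step1.
Qed.

Lemma memX u : u \in X -> exists a b, u = i1 a * i2 b.
Proof. by case/mapP => [[a b] _ ->]; exists a, b. Qed.

Lemma psi_hom : Kalg_hom_to j psi.
Proof.
have [i11 i1D i1M i1Z] := i1_hom; have [i21 i2D i2M i2Z] := i2_hom.
have [_ _ hcomm _] := HT.
have [p1 p2] := psi_jlin.
split.
- have -> : (1 : T) = i1 1 * i2 1 by rewrite i11 i21 mulr1.
  by rewrite psi_ab; case: hf1 => -> _ _ _; case: hf2 => -> _ _ _; rewrite mulr1.
- exact: p1.
- move=> x y; move: x; apply: (@jlin_span _ _ j _ X).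
  + split; first by move=> u v; rewrite mulrDl p1.
    by move=> c u; rewrite -scalerAl p2.
  + split; first by move=> u v; rewrite p1 mulrDl.
    by move=> c u; rewrite p2 mulrA.
  + exact: basis_span X_basis.
  move=> u /memX [a [b ->]]; move: y; apply: (@jlin_span _ _ j _ X).
  + split; first by move=> w1 w2; rewrite mulrDr p1.
    by move=> c w1; rewrite -scalerAr p2.
  + split; first by move=> w1 w2; rewrite p1 mulrDr.
    by move=> c w1; rewrite p2 mulrCA.
  + exact: basis_span X_basis.
  move=> v /memX [a' [b' ->]].
  have -> : i1 a * i2 b * (i1 a' * i2 b') = i1 (a * a') * i2 (b * b').
    by rewrite i1M i2M -mulrA (mulrA (i2 b)) -hcomm !mulrA.
  rewrite !psi_ab; case: hf1 => _ _ h1M _; case: hf2 => _ _ h2M _.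
  by rewrite h1M h2M mulrACA.
- exact: p2.
Qed.

End Psi.

Lemma psi_comp (g : Om -> Om) (f1 f1' : L1 -> Om) (f2 f2' : L2 -> Om) :
  is_GK j g -> Kalg_hom_to j f1 -> Kalg_hom_to j f2 ->
  Kalg_hom_to j f1' -> Kalg_hom_to j f2' ->
  (forall a, g (f1 a) = f1' a) -> (forall b, g (f2 b) = f2' b) ->
  forall t, g (psi f1 f2 t) = psi f1' f2' t.
Proof.
move=> hg h1 h2 h1' h2' e1 e2.
apply: (@jlin_span _ _ j _ X).
- case: hg => _ gD gM _ gj; split; first by move=> x y; rewrite (psi_jlin f1 f2).1 gD.
  by move=> c x; rewrite (psi_jlin f1 f2).2 gM gj.
- exact: psi_jlin.
- exact: basis_span X_basis.
- move=> u /memX [a [b ->]]; rewrite !psi_ab //.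
  by case: hg => _ _ gM _ _; rewrite gM e1 e2.
Qed.

Lemma psi_dist (f1 f1' : L1 -> Om) (f2 f2' : L2 -> Om) :
  Kalg_hom_to j f1 -> Kalg_hom_to j f2 ->
  Kalg_hom_to j f1' -> Kalg_hom_to j f2' ->
  psi f1 f2 =1 psi f1' f2' -> f1 =1 f1' /\ f2 =1 f2'.
Proof.
move=> h1 h2 h1' h2' e; have [i11 _ _ _] := i1_hom; have [i21 _ _ _] := i2_hom.
split.
- move=> a; have := e (i1 a * i2 1); rewrite !psi_ab //.
  by case: h2 => -> _ _ _; case: h2' => -> _ _ _; rewrite !mulr1.
- move=> b; have := e (i1 1 * i2 b); rewrite !psi_ab //.
  by case: h1 => -> _ _ _; case: h1' => -> _ _ _; rewrite !mul1r.
Qed.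

Lemma dimT : \dim (fullv : {vspace T}) =
  (\dim (fullv : {vspace L1}) * \dim (fullv : {vspace L2}))%N.
Proof.
rewrite (size_basis (X := Xt) X_basis) /= size_map size_allpairs.
by rewrite /A1 /B1 !size_tuple.
Qed.

End Tensor.
Lemma zid1 (V : zmodType) (u w p q r d : V) :
  u + w - r + (p + q + r - d) = u + p + (w + q) - d.
Proof.
apply/eqP; rewrite -subr_eq0; apply/eqP; rewrite !opprD !opprK !addrA.
rewrite (ACl ((1*8)*(2*10)*(3*6)*(4*9)*(5*11)*(7*12))) /=.
by rewrite !subrr !addNr !addr0.
Qed.
Lemma zid2 (V : zmodType) (s1 s2 a b c m m1 m2 : V) :
  s1 + s2 + a - m = (s1 + b - m1) + (s2 + c - m2) + (a - b - c) - (m - m1 - m2).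
Proof.
apply/eqP; rewrite -subr_eq0; apply/eqP; rewrite !opprD !opprK !addrA.
rewrite (ACl ((1*5)*(2*8)*(3*11)*(4*14)*(6*12)*(7*15)*(9*13)*(10*16))) /=.
by rewrite !subrr !addNr !addr0.
Qed.


Unset Implicit Arguments. Set Strict Implicit.

Theorem proposition4p7
  (K Om : fieldType) (j : {rmorphism K -> Om})
  (Hsep : is_sep_closure j)
  (M : finZmodType) (phi : (Om -> Om) -> M -> M)
  (Hphi : galois_module j phi)
  (s1 s2 : (Om -> Om) -> M)
  (Hs1 : crossed_hom j phi s1) (Hs2 : crossed_hom j phi s2)
  (L1 L2 L : falgType K)
  (HL1 : corresponds_class j phi L1 s1)
  (HL2 : corresponds_class j phi L2 s2)
  (HL : corresponds_class j phi L (fun g => s1 g + s2 g))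
  (T : falgType K) (i1 : L1 -> T) (i2 : L2 -> T)
  (HT : is_tensor i1 i2) :
  exists f : L -> T, Kalg_hom f /\ injective f.
Proof.
have FF := fixed_field Hsep.
case: HL1 => t1 [[m1 hm1] [dim1 [io1 [io1h io1i io1s io1g]]]].
case: HL2 => t2 [[m2 hm2] [dim2 [io2 [io2h io2i io2s io2g]]]].
case: HL => t [[m hm] [dimL [io [ioh ioi ios iog]]]].
case: Hphi => phib phiD _ _ _.
have phiB : forall g, is_GK j g -> forall a b, phi g (a - b) = phi g a - phi g b.
  by move=> g hg a b; apply/eqP; rewrite eq_sym subr_eq -phiD // subrK.
pose d := m - m1 - m2.
pose ps (p : M * M) := psi j i1 i2 (io1 p.1) (io2 p.2).
have psh : forall p, Kalg_hom_to j (ps p) := fun p => psi_hom HT (io1h p.1) (io2h p.2).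
have psd : forall p p', ps p =1 ps p' -> p = p'.
  move=> [x y] [x' y'] e.
  have [e1 e2] := psi_dist HT (io1h x) (io2h y) (io1h x') (io2h y') e.
  by rewrite (io1i _ _ e1) (io2i _ _ e2).
have hI : #|{: M * M}| = \dim (fullv : {vspace T}).
  by rewrite card_prod (dimT HT) dim1 dim2.
have key : forall l, exists tt : T, forall p, ps p tt = io (p.1 + p.2 - d) l.
  move=> l; apply: (descent_I hI psh psd FF).
  move=> g hg.
  have [ph' phK phK'] := phib g hg.
  exists (fun p => (phi g p.1 + t1 g, phi g p.2 + t2 g)); split.
  - move=> [x y]; exists (ph' (x - t1 g), ph' (y - t2 g)) => /=.
    by rewrite !phK' !subrK.
  - move=> [x y]; split.
    + move=> a; exact: (psi_comp HT hg (io1h x) (io2h y) (io1h _) (io2h _)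
        (io1g g hg x) (io2g g hg y)).
    + have := iog g hg (x + y - d) l => /= ->; congr (io _ l).
      have ht : t g = t1 g + t2 g + phi g d - d.
        rewrite (hm g hg) (hm1 g hg) (hm2 g hg) /d !phiB //.
        exact: zid2.
      by rewrite ht !phiB // phiD // zid1.
pose f l := sval (cid (key l)).
have fE : forall l p, ps p (f l) = io (p.1 + p.2 - d) l.
  by move=> l p; rewrite /f; case: (cid _) => /= tt ->.
have injT := inj_I hI psh psd.
exists f; split.
- split.
  + apply: injT => p; rewrite fE.
    by case: (ioh (p.1 + p.2 - d)) => -> _ _ _; case: (psh p) => -> _ _ _.
  + move=> a b; apply: injT => p; rewrite fE.
    case: (ioh (p.1 + p.2 - d)) => _ -> _ _; case: (psh p) => _ -> _ _.
    by rewrite !fE.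
  + move=> a b; apply: injT => p; rewrite fE.
    case: (ioh (p.1 + p.2 - d)) => _ _ -> _; case: (psh p) => _ _ -> _.
    by rewrite !fE.
  + move=> k a; apply: injT => p; rewrite fE.
    case: (ioh (p.1 + p.2 - d)) => _ _ _ ->; case: (psh p) => _ _ _ ->.
    by rewrite !fE.
- move=> a b e; apply: (inj_I (esym dimL) ioh ioi) => z.
  have := congr1 (ps (z + d, 0)) e; rewrite !fE /= addr0 addrK.
  by [].
Qed.
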